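(* Let $(X,d)$ be a metric space and let $U\subseteq F_{USCB}(X)$. Then $U$ is relatively compact in $(F_{USCB}(X),H_{\rm send})$ if and only if $U(0)=\bigcup_{u\in U}[u]_0$ is relatively compact in $X$ and $U$ is equi-right-continuous at $0$.
   Context: A fuzzy set on $X$ is a function $u:X\to[0,1]$, with $\alpha$-cuts $[u]_\alpha=\{x: u(x)\ge\alpha\}$ for $\alpha\in(0,1]$ and $[u]_0=\overline{\{u>0\}}$. $F_{USC}(X)$ is the set of fuzzy sets with all $\alpha$-cuts ($\alpha\in[0,1]$) non-empty and closed; $F_{USCB}(X)=\{u\in F_{USC}(X): [u]_0\text{ is compact}\}$. The Hausdorff distance on non-empty closed subsets of a metric space $(Y,\rho)$ is $H(A,B)=\max\{\sup_{a\in A}\inf_{b\in B}\rho(a,b),\sup_{b\in B}\inf_{a\in A}\rho(a,b)\}$. $X\times[0,1]$ is metrized by $\overline{d}((x,\alpha),(y,\beta))=d(x,y)+|\alpha-\beta|$; ${\rm send}\,u=\{(x,t)\in X\times[0,1]: u(x)\ge t\}\cap([u]_0\times[0,1])$; $H_{\rm send}(u,v)=H({\rm send}\,u,{\rm send}\,v)$ (with $\rho=\overline{d}$). $U\subseteq F_{USC}(X)$ is equi-right-continuous at $0$ if for each $\varepsilon>0$ there is $\delta>0$ such that $H([u]_\delta,[u]_0)<\varepsilon$ (with $\rho=d$) for all $u\in U$. *)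

(* Defs.v *)
(* R : realType, sets from classical_sets,
   distances valued in extended reals \bar R (so that sup/inf are total). *)
From HB Require Import structures.
From mathcomp Require Import all_boot all_order all_algebra.
From mathcomp Require Import all_classical all_reals ereal.
Set Implicit Arguments. Unset Strict Implicit. Unset Printing Implicit Defensive.
Import Order.TTheory GRing.Theory Num.Theory.
Local Open Scope classical_set_scope.
Local Open Scope ring_scope.

Section Defs.
Variable R : realType.

Definition is_metric (X : Type) (d : X -> X -> R) : Prop :=
  (forall x y, 0 <= d x y) /\ (forall x y, d x y = 0 <-> x = y) /\
  (forall x y, d x y = d y x) /\ (forall x y z, d x z <= d x y + d y z).

Definition closure_in (T : Type) (M : set T) (rho : T -> T -> \bar R) (A : set T)
  : set T :=
  [set x | M x /\ forall e : R, 0 < e -> exists a, A a /\ (rho x a < e%:E)%E].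

Definition open_in (T : Type) (M : set T) (rho : T -> T -> \bar R) (G : set T)
  : Prop :=
  G `<=` M /\ forall x, G x -> exists2 e : R, 0 < e &
     [set y | M y /\ (rho x y < e%:E)%E] `<=` G.

Definition closed_in (T : Type) (M : set T) (rho : T -> T -> \bar R) (A : set T)
  : Prop := A `<=` M /\ closure_in M rho A `<=` A.

Definition compact_in (T : Type) (M : set T) (rho : T -> T -> \bar R) (K : set T)
  : Prop :=
  K `<=` M /\
  forall (I : Type) (G : I -> set T), (forall i, open_in M rho (G i)) ->
    K `<=` \bigcup_i G i ->
    exists (n : nat) (f : nat -> I), K `<=` \bigcup_(k in [set k | (k < n)%N]) G (f k).

Definition relcompact_in (T : Type) (M : set T) (rho : T -> T -> \bar R) (A : set T)
  : Prop := A `<=` M /\ compact_in M rho (closure_in M rho A).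

Definition hausdorff (T : Type) (rho : T -> T -> \bar R) (A B : set T) : \bar R :=
  Order.max
    (ereal_sup [set ereal_inf [set rho a b | b in B] | a in A])
    (ereal_sup [set ereal_inf [set rho a b | a in A] | b in B]).

Section Fuzzy.
Variables (X : Type) (d : X -> X -> R).

Definition dE : X -> X -> \bar R := fun x y => (d x y)%:E.

Definition is_fuzzy (u : X -> R) : Prop := forall x, 0 <= u x <= 1.

Definition cut (u : X -> R) (alpha : R) : set X := [set x | alpha <= u x].
Definition cut0 (u : X -> R) : set X := closure_in setT dE [set x | 0 < u x].
Definition cutA (u : X -> R) (alpha : R) : set X :=
  if alpha == 0 then cut0 u else cut u alpha.

Definition FUSC : set (X -> R) :=
  [set u | is_fuzzy u /\ forall alpha : R, 0 <= alpha <= 1 ->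
     cutA u alpha !=set0 /\ closed_in setT dE (cutA u alpha)].

Definition FUSCB : set (X -> R) :=
  [set u | FUSC u /\ compact_in setT dE (cut0 u)].

Definition dbar (p q : X * R) : \bar R := (d p.1 q.1 + `|p.2 - q.2|)%:E.

Definition send (u : X -> R) : set (X * R) :=
  [set p | 0 <= p.2 <= 1 /\ p.2 <= u p.1 /\ cut0 u p.1].

Definition Hsend (u v : X -> R) : \bar R := hausdorff dbar (send u) (send v).

Definition equi_right_cont0 (U : set (X -> R)) : Prop :=
  forall e : R, 0 < e -> exists2 delta : R, 0 < delta &
    forall u, U u -> (hausdorff dE (cutA u delta) (cut0 u) < e%:E)%E.

Definition U0 (U : set (X -> R)) : set X := \bigcup_(u in U) cut0 u.

End Fuzzy.
End Defs.

(* Main.v *)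
Require Import Defs.
From HB Require Import structures.
From mathcomp Require Import all_boot all_order all_algebra.
From mathcomp Require Import all_classical all_reals ereal.
From mathcomp Require Import lra.
Set Implicit Arguments. Unset Strict Implicit. Unset Printing Implicit Defensive.
Import Order.TTheory GRing.Theory Num.Theory.
Local Open Scope classical_set_scope.
Local Open Scope ring_scope.
Section Haus.
Variables (R : realType) (T : Type) (rho : T -> T -> \bar R).

Lemma haus_le (A B : set T) (s : R) :
  (forall a, A a -> exists2 b, B b & (rho a b < s%:E)%E) ->
  (forall b, B b -> exists2 a, A a & (rho a b < s%:E)%E) ->
  (hausdorff rho A B <= s%:E)%E.
Proof.
move=> hA hB; rewrite /hausdorff ge_max; apply/andP; split;
  apply: ge_ereal_sup => _ [x Ax <-].
- have [b Bb lt] := hA x Ax; apply: le_trans (ltW lt).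
  by apply: ereal_inf_lbound; exists b.
- have [a Aa lt] := hB x Ax; apply: le_trans (ltW lt).
  by apply: ereal_inf_lbound; exists a.
Qed.

Lemma haus_lt (A B : set T) (s : R) :
  (hausdorff rho A B < s%:E)%E ->
  (forall a, A a -> exists2 b, B b & (rho a b < s%:E)%E) /\
  (forall b, B b -> exists2 a, A a & (rho a b < s%:E)%E).
Proof.
rewrite /hausdorff gt_max => /andP[h1 h2]; split.
- move=> a Aa; apply: contrapT => hn.
  have le : (s%:E <= ereal_inf [set rho a b | b in B])%E.
    apply: le_ereal_inf_tmp => _ [b Bb <-]; rewrite leNgt; apply/negP => lt.
    by apply: hn; exists b.
  have le2 : (ereal_inf [set rho a b | b in B] <=
      ereal_sup [set ereal_inf [set rho a0 b | b in B] | a0 in A])%E.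
    by apply: ereal_sup_ubound; exists a.
  by move: h1; rewrite ltNge (le_trans le le2).
- move=> b Bb; apply: contrapT => hn.
  have le : (s%:E <= ereal_inf [set rho a b | a in A])%E.
    apply: le_ereal_inf_tmp => _ [a Aa <-]; rewrite leNgt; apply/negP => lt.
    by apply: hn; exists a.
  have le2 : (ereal_inf [set rho a b | a in A] <=
      ereal_sup [set ereal_inf [set rho a b0 | a in A] | b0 in B])%E.
    by apply: ereal_sup_ubound; exists b.
  by move: h2; rewrite ltNge (le_trans le le2).
Qed.

End Haus.

Lemma exists_inv (R : realType) (e : R) : 0 < e -> exists N : nat, N.+1%:R^-1 < e.
Proof.
move=> e0; have b0 : 0 <= e^-1 by rewrite invr_ge0 ltW.
have := Num.Theory.archi_boundP b0; set N := Num.bound _ => hN.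
exists N; rewrite invf_plt ?posrE //; apply: lt_trans hN _.
by rewrite ltr_nat.
Qed.

Lemma ereal_mid (R : realType) (z : \bar R) (e : R) :
  (z < e%:E)%E -> exists2 a : R, (z < a%:E)%E & a < e.
Proof.
case: z => [r| |] //=.
- rewrite lte_fin => re; exists ((r + e) / 2); rewrite ?lte_fin; lra.
- by move=> _; exists (e - 1); rewrite ?ltNye //; lra.
Qed.

Fixpoint iter_seq (T : Type) (p : seq T -> T) (n : nat) : seq T :=
  if n is n'.+1 then rcons (iter_seq p n') (p (iter_seq p n')) else [::].

Lemma size_iter_seq T (p : seq T -> T) n : size (iter_seq p n) = n.
Proof. by elim: n => //= n IH; rewrite size_rcons IH. Qed.

Lemma nth_iter_seq T (p : seq T -> T) x0 n j : (j < n)%N ->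
  nth x0 (iter_seq p n) j = p (iter_seq p j).
Proof.
elim: n => // n IH; rewrite ltnS leq_eqVlt => /orP[/eqP ->|jn] /=.
  by rewrite nth_rcons size_iter_seq ltnn eqxx.
by rewrite nth_rcons size_iter_seq jn IH.
Qed.

Section Comp.
Variables (R : realType) (T : Type) (M : set T) (rho : T -> T -> \bar R).
Hypothesis rho_sym : forall x y, M x -> M y -> rho x y = rho y x.
Hypothesis rho_tri : forall x y z (a b : R), M x -> M y -> M z ->
  (rho x y < a%:E)%E -> (rho y z < b%:E)%E -> (rho x z < (a + b)%:E)%E.
Hypothesis rho_refl : forall x (e : R), M x -> 0 < e -> (rho x x < e%:E)%E.
Variable UF : set (set nat).
Hypotheses (UT : UF setT) (UI : forall A B, UF A -> UF B -> UF (A `&` B))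
  (US : forall A B, A `<=` B -> UF A -> UF B) (U0 : ~ UF set0)
  (UU : forall A, UF A \/ UF (~` A)) (Ucof : forall N, UF [set n | (N <= n)%N]).

Definition ball x e := [set y | M y /\ (rho x y < e%:E)%E].
Definition ulim (s : nat -> T) x :=
  forall e : R, 0 < e -> UF [set n | (rho x (s n) < e%:E)%E].

Lemma UF_ex A : UF A -> exists n, A n.
Proof.
move=> UA; apply: contrapT => hn; apply: U0; apply: US UA => n An.
by apply: hn; exists n.
Qed.

Lemma UF_ex_ge A N : UF A -> exists n, (N <= n)%N /\ A n.
Proof.
move=> UA; have [n [An Nn]] := UF_ex (UI UA (Ucof N)); by exists n.
Qed.

Lemma UF_union A B : UF (A `|` B) -> UF A \/ UF B.
Proof.
move=> UAB; case: (UU A) => [|nA]; first by left.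
case: (UU B) => [|nB]; first by right.
exfalso; apply: U0; apply: US (UI UAB (UI nA nB)) => n [[An|Bn] [nAn nBn]].
  exact: nAn. exact: nBn.
Qed.

Lemma UF_bigcup N (A : nat -> set nat) :
  UF (\bigcup_(k in [set k | (k < N)%N]) A k) -> exists k, (k < N)%N /\ UF (A k).
Proof.
elim: N => [|N IH] UA.
  by exfalso; apply: U0; apply: US UA => n [k].
have : UF (\bigcup_(k in [set k | (k < N)%N]) A k `|` A N).
  apply: US UA => n [k /=]; rewrite ltnS leq_eqVlt => /orP[/eqP ->|kN] Akn.
    by right. by left; exists k.
move=> /UF_union [/IH [k [kN Uk]]|UN]; first by exists k; split => //; exact: ltnW.
by exists N.
Qed.

Lemma ball_open x e : M x -> open_in M rho (ball x e).
Proof.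
move=> Mx; split; first by move=> y [].
move=> y [My lt]; have [a lta ae] := ereal_mid lt.
exists (e - a); first by rewrite subr_gt0.
move=> z [Mz lz]; split => //.
by have := rho_tri Mx My Mz lta lz; rewrite addrC subrK.
Qed.

Lemma ball_cond_open (P : Prop) x e : M x -> open_in M rho [set y | P /\ ball x e y].
Proof.
move=> Mx; split; first by move=> y [_ []].
move=> y [p [My lt]]; have [a lta ae] := ereal_mid lt.
exists (e - a); first by rewrite subr_gt0.
move=> z [Mz lz]; split => //; split => //.
by have := rho_tri Mx My Mz lta lz; rewrite addrC subrK.
Qed.

Lemma ulim_closure A s x : M x -> ulim s x -> UF [set n | A (s n)] ->
  closure_in M rho A x.
Proof.
move=> Mx ul UA; split => // e e0.
have [n [lt An]] := UF_ex (UI (ul e e0) UA); by exists (s n).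
Qed.

Lemma closure_idem A : A `<=` M ->
  closure_in M rho (closure_in M rho A) `<=` closure_in M rho A.
Proof.
move=> AM x [Mx h]; split => // e e0.
have e2 : 0 < e / 2 by rewrite divr_gt0.
have [y [[My hy] lt]] := h (e / 2) e2.
have [z [Az lz]] := hy (e / 2) e2.
exists z; split => //.
by have := rho_tri Mx My (AM _ Az) lt lz; rewrite -splitr.
Qed.

Lemma compact_ulim K s : compact_in M rho K -> UF [set n | K (s n)] ->
  exists2 x, K x & ulim s x.
Proof.
move=> [KM cov] hK; apply: contrapT => hn.
have H : forall x, exists e : R, K x -> 0 < e /\ ~ UF [set n | (rho x (s n) < e%:E)%E].
  move=> x; case: (pselect (K x)) => Kx; last by exists 1.
  have : ~ ulim s x by move=> ul; apply: hn; exists x.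
  move=> /existsNP [e] /not_implyP [e0 nU]; by exists e.
have [ef hef] := choice H.
pose G x := [set y | K x /\ ball x (ef x) y].
have Gop : forall x, open_in M rho (G x).
  move=> x; split; first by move=> y [_ []].
  move=> y [Kx [My lt]]; have [a lta ae] := ereal_mid lt.
  exists (ef x - a); first by rewrite subr_gt0.
  move=> z [Mz lz]; split => //; split => //.
  by have := rho_tri (KM _ Kx) My Mz lta lz; rewrite addrC subrK.
have Kcov : K `<=` \bigcup_x G x.
  move=> y Ky; exists y => //; split => //; split; first exact: KM.
  by apply: rho_refl; [exact: KM| exact: (hef y Ky).1].
have [N [f hf]] := cov T G Gop Kcov.
have : UF (\bigcup_(k in [set k | (k < N)%N]) [set n | G (f k) (s n)]).
  by apply: US hK => n /hf [k kN Gk]; exists k.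
move=> /UF_bigcup [k [kN Uk]].
have [n [Kfk _]] := UF_ex Uk.
apply: (hef _ Kfk).2; apply: US Uk => m [_ [_ lt]]; exact: lt.
Qed.

Lemma ulim_compact K x0 : K `<=` M -> K x0 ->
  (forall s, (forall n, K (s n)) -> exists2 x, K x & ulim s x) ->
  compact_in M rho K.
Proof.
move=> KM Kx0 hseq; split => // I G Gop cov.
have [i0 _ _] := cov x0 Kx0.
have leb : exists2 eps : R, 0 < eps &
    forall x, K x -> exists i, ball x eps `<=` G i.
  apply: contrapT => hn.
  have H : forall n : nat, exists x, K x /\
      forall i, ~ (ball x (n.+1%:R^-1) `<=` G i).
    move=> n; apply: contrapT => h2; apply: hn; exists (n.+1%:R^-1) => //.
    move=> x Kx; apply: contrapT => h3; apply: h2; exists x; split => // i hi.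
    by apply: h3; exists i.
  have [s hs] := choice H.
  have [z Kz zl] := hseq s (fun n => (hs n).1).
  have [i _ Gi] := cov z Kz.
  have [e e0 be] := (Gop i).2 z Gi.
  have e20 : 0 < e / 2 by rewrite divr_gt0.
  have [N hN] := exists_inv e20.
  have [n [Nn ln]] := UF_ex_ge N (zl _ e20).
  apply: ((hs n).2 i); move=> y [My ly]; apply: be; split => //.
  have ly' : (rho (s n) y < (e / 2)%:E)%E.
    apply: lt_le_trans ly _; rewrite lee_fin; apply: ltW; apply: le_lt_trans hN.
    by rewrite lef_pV2 ?posrE // ler_nat.
  by have := rho_tri (KM _ Kz) (KM _ (hs n).1) My ln ly'; rewrite -splitr.
have [eps e0 leb'] := leb.
pose far (l : seq T) y := forall j, (j < size l)%N ->
  ~ (rho (nth x0 l j) y < eps%:E)%E.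
have H : forall l : seq T, exists x, K x /\ ((exists y, K y /\ far l y) -> far l x).
  move=> l; case: (pselect (exists y, K y /\ far l y)) => [[y [Ky fy]]|nex].
    by exists y; split => // _.
  by exists x0; split => // h; exfalso; apply: nex.
have [pick hpick] := choice H.
pose F := iter_seq pick.
case: (pselect (forall n, exists y, K y /\ far (F n) y)) => [hall|].
  pose x n := pick (F n).
  have Kx : forall n, K (x n) by move=> n; exact: (hpick _).1.
  have farx : forall j n, (j < n)%N -> ~ (rho (x j) (x n) < eps%:E)%E.
    move=> j n jn; have := (hpick (F n)).2 (hall n) j.
    by rewrite /F size_iter_seq nth_iter_seq //; apply.
  have [z Kz zl] := hseq x Kx.
  have e20 : 0 < eps / 2 by rewrite divr_gt0.
  have [n1 l1] := UF_ex (zl _ e20).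
  have [n2 [n12 l2]] := UF_ex_ge n1.+1 (zl _ e20).
  exfalso; apply: (farx n1 n2 n12).
  have l1' : (rho (x n1) z < (eps / 2)%:E)%E by rewrite rho_sym //; exact: KM.
  by have := rho_tri (KM _ (Kx _)) (KM _ Kz) (KM _ (Kx _)) l1' l2; rewrite -splitr.
move=> /existsNP [n] hn.
have Hi : forall x, exists i, K x -> ball x eps `<=` G i.
  move=> x; case: (pselect (K x)) => Kx; last by exists i0.
  by have [i hi] := leb' x Kx; exists i.
have [gi hgi] := choice Hi.
exists n, (fun k => gi (nth x0 (F n) k)).
move=> y Ky.
have : ~ far (F n) y by move=> fy; apply: hn; exists y.
move=> /existsNP [j] /not_implyP [jn /contrapT lt].
have KF : K (nth x0 (F n) j).
  have jn' : (j < n)%N by move: jn; rewrite size_iter_seq.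
  by rewrite /F nth_iter_seq //; exact: (hpick _).1.
exists j; first by move: jn; rewrite size_iter_seq.
by apply: (hgi _ KF); split => //; exact: KM.
Qed.

End Comp.

Lemma compact_nonempty (R : realType) (T : Type) (M : set T) (rho : T -> T -> \bar R) K :
  compact_in M rho K -> exists x, K x.
Proof.
move=> [KM cov]; apply: contrapT => hn.
have [n [f _]] := cov False (fun _ => set0) (fun _ => conj (fun _ (h : set0 _) => match h with end) (fun _ (h : set0 _) => match h with end)) (fun x Kx => False_ind _ (hn (ex_intro _ x Kx))).
by case: (f 0%N).
Qed.

Lemma haus_sym (R : realType) (T : Type) (rho : T -> T -> \bar R) A B :
  (forall a b, rho a b = rho b a) -> hausdorff rho A B = hausdorff rho B A.
Proof.
move=> hs; rewrite [in RHS](_ : rho = fun a b => rho b a); last first.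
  by apply/funext => a; apply/funext => b.
by rewrite /hausdorff maxC.
Qed.

Section Fz.
Variables (R : realType) (X : Type) (d : X -> X -> R).
Hypothesis hd : is_metric d.

Lemma d_ge0 x y : 0 <= d x y. Proof. exact: hd.1. Qed.
Lemma d_xx x : d x x = 0. Proof. exact: (hd.2.1 x x).2. Qed.
Lemma d_sym x y : d x y = d y x. Proof. exact: hd.2.2.1. Qed.
Lemma d_tri x y z : d x z <= d x y + d y z. Proof. exact: hd.2.2.2. Qed.

Lemma dE_sym x y : setT x -> setT y -> dE d x y = dE d y x.
Proof. by rewrite /dE d_sym. Qed.
Lemma dE_tri x y z (a b : R) : setT x -> setT y -> setT z ->
  (dE d x y < a%:E)%E -> (dE d y z < b%:E)%E -> (dE d x z < (a + b)%:E)%E.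
Proof.
rewrite /dE !lte_fin => _ _ _ h1 h2; apply: le_lt_trans (d_tri x y z) _.
exact: ltrD.
Qed.
Lemma dE_refl x (e : R) : setT x -> 0 < e -> (dE d x x < e%:E)%E.
Proof. by rewrite /dE d_xx lte_fin. Qed.

Lemma dbar_sym p q : dbar d p q = dbar d q p.
Proof. by rewrite /dbar d_sym distrC. Qed.
Lemma dbar_tri p q r (a b : R) :
  (dbar d p q < a%:E)%E -> (dbar d q r < b%:E)%E -> (dbar d p r < (a + b)%:E)%E.
Proof.
rewrite /dbar !lte_fin => h1 h2.
have := d_tri p.1 q.1 r.1; have := ler_distD q.2 p.2 r.2; lra.
Qed.
Lemma dbar_refl p (e : R) : 0 < e -> (dbar d p p < e%:E)%E.
Proof. by rewrite /dbar d_xx subrr normr0 addr0 lte_fin. Qed.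
Lemma dbar_d p q (e : R) : (dbar d p q < e%:E)%E -> d p.1 q.1 < e.
Proof. rewrite /dbar lte_fin => h; have := normr_ge0 (p.2 - q.2); lra. Qed.
Lemma dbar_n p q (e : R) : (dbar d p q < e%:E)%E -> `|p.2 - q.2| < e.
Proof. rewrite /dbar lte_fin => h; have := d_ge0 p.1 q.1; lra. Qed.
Lemma dbar_mk x y s t (a b : R) : d x y < a -> `|s - t| < b ->
  (dbar d (x, s) (y, t) < (a + b)%:E)%E.
Proof. by rewrite /dbar lte_fin /= => h1 h2; lra. Qed.

Lemma Hs_sym u v : Hsend d u v = Hsend d v u.
Proof. by rewrite /Hsend haus_sym //; exact: dbar_sym. Qed.

Lemma Hs_tri (M : set (X -> R)) u v w (a b : R) : M u -> M v -> M w ->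
  (Hsend d u v < a%:E)%E -> (Hsend d v w < b%:E)%E -> (Hsend d u w < (a + b)%:E)%E.
Proof.
move=> _ _ _ h1 h2.
have [a' h1' aa] := ereal_mid h1; have [b' h2' bb] := ereal_mid h2.
have [A1 A2] := haus_lt h1'; have [B1 B2] := haus_lt h2'.
apply: le_lt_trans (_ : (hausdorff (dbar d) (send d u) (send d w) <= (a' + b')%:E)%E) _.
  apply: haus_le.
  - move=> p /A1 [q /B1 [r sr lr] lq]; exists r => //; exact: dbar_tri lq lr.
  - move=> r /B2 [q /A2 [p sp lp] lq]; exists p => //; exact: dbar_tri lp lq.
by rewrite lte_fin; lra.
Qed.

Lemma Hs_refl (M : set (X -> R)) u (e : R) : M u -> 0 < e -> (Hsend d u u < e%:E)%E.
Proof.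
move=> _ e0; apply: le_lt_trans (_ : (Hsend d u u <= (e / 2)%:E)%E) _.
  by apply: haus_le => p sp; exists p => //; apply: dbar_refl; rewrite divr_gt0.
by rewrite lte_fin; lra.
Qed.

Lemma Hs_sym' (M : set (X -> R)) u v : M u -> M v -> Hsend d u v = Hsend d v u.
Proof. by move=> _ _; exact: Hs_sym. Qed.

Lemma cut0_pos u x : 0 < u x -> cut0 d u x.
Proof. move=> ux; split => // e e0; exists x; split => //; exact: dE_refl. Qed.

Lemma cutA_pos u (a : R) : 0 < a -> cutA d u a = cut u a.
Proof. by move=> a0; rewrite /cutA gt_eqF. Qed.

Lemma FUSC_top u : FUSC d u -> exists x, send d u (x, 1).
Proof.
move=> [fz hc]; have h01 : 0 <= (1 : R) <= 1 by apply/andP; split; lra.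
have [[x hx] _] := hc 1 h01.
move: hx; rewrite /cutA oner_eq0 /cut /= => hx.
have ux1 := (fz x); move/andP: ux1 => [_ ux1].
exists x; split; first by apply/andP; split; rewrite /=; lra.
split => //; apply: cut0_pos => /=; lra.
Qed.

Lemma FUSC_cut0 u : FUSC d u -> exists x, cut0 d u x.
Proof. by move=> /FUSC_top [x [_ [_ h]]]; exists x. Qed.

End Fz.

Lemma inv_le (R : realType) (N n : nat) : (N <= n)%N -> n.+1%:R^-1 <= N.+1%:R^-1 :> R.
Proof. by move=> Nn; rewrite lef_pV2 ?posrE // ler_nat ltnS. Qed.

Lemma inv_pos (R : realType) (n : nat) : 0 < n.+1%:R^-1 :> R.
Proof. by rewrite invr_gt0 ltr0Sn. Qed.

Lemma min_pos (R : realType) N (P : nat -> Prop) (a : nat -> R) :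
  (forall k, P k -> 0 < a k) ->
  exists2 δ, 0 < δ & forall k, (k < N)%N -> P k -> δ <= a k.
Proof.
move=> ha; elim: N => [|N [δ δ0 hδ]]; first by exists 1.
case: (pselect (P N)) => PN.
  exists (Num.min δ (a N)); first by rewrite lt_min δ0 ha.
  move=> k; rewrite ltnS leq_eqVlt => /orP[/eqP ->|kN] Pk.
    by rewrite ge_min lexx orbT.
  by rewrite ge_min hδ.
exists δ => // k; rewrite ltnS leq_eqVlt => /orP[/eqP ->|kN] Pk //.
exact: hδ.
Qed.

Section Main.
Variables (R : realType) (X : Type) (d : X -> X -> R).
Hypothesis hd : is_metric d.
Variable UF : set (set nat).
Hypotheses (UT : UF setT) (UI : forall A B, UF A -> UF B -> UF (A `&` B))
  (US : forall A B, A `<=` B -> UF A -> UF B) (Uemp : ~ UF set0)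
  (UU : forall A, UF A \/ UF (~` A)) (Ucof : forall N, UF [set n | (N <= n)%N]).
Variable U : set (X -> R).
Hypothesis hU : U `<=` FUSCB d.

Local Notation FB := (FUSCB d).
Local Notation K := (closure_in (FUSCB d) (Hsend d) U).

Lemma cuX A s : compact_in setT (dE d) A -> UF [set n | A (s n)] ->
  exists2 x, A x & ulim (dE d) UF s x.
Proof. move=> h1 h2. have := @compact_ulim R X setT (dE d) (dE_tri hd) (dE_refl hd) UF UI US Uemp UU A s h1 h2. by []. Qed.

Lemma cuF A s : compact_in FB (Hsend d) A -> UF [set n | A (s n)] ->
  exists2 x, A x & ulim (Hsend d) UF s x.
Proof. move=> h1 h2. have := @compact_ulim R (X -> R) FB (Hsend d) (@Hs_tri _ _ _ hd FB) (@Hs_refl _ _ _ hd FB) UF UI US Uemp UU A s h1 h2. by []. Qed.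

Lemma ucX A x0 : A x0 ->
  (forall s, (forall n, A (s n)) -> exists2 x, A x & ulim (dE d) UF s x) ->
  compact_in setT (dE d) A.
Proof. move=> h1 h2. exact: (@ulim_compact R X setT (dE d) (dE_sym hd) (dE_tri hd) UF UI US Uemp Ucof A x0 (fun _ _ => I) h1 h2). Qed.

Lemma ucF A x0 : A `<=` FB -> A x0 ->
  (forall s, (forall n, A (s n)) -> exists2 x, A x & ulim (Hsend d) UF s x) ->
  compact_in FB (Hsend d) A.
Proof. move=> h0 h1 h2. exact: (@ulim_compact R (X -> R) FB (Hsend d) (@Hs_sym' _ _ _ hd FB) (@Hs_tri _ _ _ hd FB) UF UI US Uemp Ucof A x0 h0 h1 h2). Qed.

Lemma uclX A s x : ulim (dE d) UF s x -> UF [set n | A (s n)] ->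
  closure_in setT (dE d) A x.
Proof. move=> h1 h2. exact: (@ulim_closure R X setT (dE d) UF UI US Uemp A s x I h1 h2). Qed.

Lemma uclF A s v : FB v -> ulim (Hsend d) UF s v -> UF [set n | A (s n)] ->
  closure_in FB (Hsend d) A v.
Proof. move=> h0 h1 h2. exact: (@ulim_closure R (X -> R) FB (Hsend d) UF UI US Uemp A s v h0 h1 h2). Qed.

Lemma ex A : UF A -> exists n, A n. Proof. exact: (@UF_ex UF US Uemp A). Qed.
Lemma exge A N : UF A -> exists n, (N <= n)%N /\ A n.
Proof. exact: (@UF_ex_ge UF UI US Uemp Ucof A N). Qed.

Lemma UsubK : U `<=` K.
Proof.
move=> u Uu; split; first exact: hU.
by move=> e e0; exists u; split => //; exact: (@Hs_refl _ _ _ hd FB u e (hU Uu) e0).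
Qed.

Lemma fuzzy01 u x : FB u -> 0 <= u x <= 1.
Proof. by move=> [[fz _] _]; exact: fz. Qed.

Lemma rc_lemma v (η : R) : FB v -> 0 < η ->
  exists2 δ, 0 < δ & forall y, cut0 d v y -> exists2 z, δ <= v z & d y z < η.
Proof.
move=> [_ cov] η0; have η2 : 0 < η / 2 by rewrite divr_gt0.
have Hz : forall y, exists z, cut0 d v y -> 0 < v z /\ d y z < η / 2.
  move=> y; case: (pselect (cut0 d v y)) => cy; last by exists y.
  have [_ h] := cy; have [z [vz dz]] := h _ η2.
  by exists z => _; split => //; rewrite /dE lte_fin in dz.
have [zf hz] := choice Hz.
pose G y := [set w | cut0 d v y /\ ball setT (dE d) y (η / 2) w].
have Gop : forall y, open_in setT (dE d) (G y).
  by move=> y; apply: ball_cond_open (dE_tri hd) _ _ _ I.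
have cover : cut0 d v `<=` \bigcup_y G y.
  move=> y cy; exists y => //; split => //; split => //; exact: dE_refl.
have [N [f hf]] := cov.2 X G Gop cover.
have [δ δ0 hδ] := @min_pos R N (fun k => cut0 d v (f k)) (fun k => v (zf (f k)))
  (fun k ck => (hz _ ck).1).
exists δ => // y cy.
have [k kN [ck [_ lt]]] := hf y cy.
exists (zf (f k)); first exact: hδ.
have h1 := (hz _ ck).2; rewrite /dE lte_fin in lt.
have := d_tri hd y (f k) (zf (f k)); rewrite (d_sym hd y (f k)); lra.
Qed.

Lemma send0 u x : FB u -> cut0 d u x -> send d u (x, 0).
Proof.
move=> Fu cx; split; first by rewrite /= lexx ler01.
by split => //=; have /andP[] := fuzzy01 x Fu.
Qed.

Lemma rel_equi : relcompact_in FB (Hsend d) U -> equi_right_cont0 d U.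
Proof.
move=> [UM Kc] e e0; apply: contrapT => hn.
have H : forall n : nat, exists u, U u /\ ~ (hausdorff (dE d) (cutA d u n.+1%:R^-1) (cut0 d u) < e%:E)%E.
  move=> n; apply: contrapT => h2; apply: hn; exists n.+1%:R^-1; first exact: inv_pos.
  move=> u Uu; apply: contrapT => h3; apply: h2; by exists u.
have [s hs] := choice H.
have [v Kv vl] := cuF Kc (US (fun n _ => UsubK (hs n).1) UT).
pose η := e / 4; have η0 : 0 < η by rewrite divr_gt0.
have [δ δ0 hδ] := rc_lemma Kv.1 η0.
have δ2 : 0 < δ / 2 by rewrite divr_gt0.
pose r := Num.min η (δ / 2).
have r0 : 0 < r by rewrite lt_min η0 δ2.
have r1 : r <= η by rewrite ge_min lexx.
have r2 : r <= δ / 2 by rewrite ge_min lexx orbT.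
have [N hN] := exists_inv δ2.
have [n [Nn ln]] := exge N (vl r r0).
have [Uu hnu] := hs n; apply: hnu; have Fu := hU Uu.
have Fv := Kv.1.
have hnN := inv_le R Nn.
rewrite cutA_pos; last exact: inv_pos.
apply: le_lt_trans (_ : (_ <= (3 * η)%:E)%E) _; last by rewrite lte_fin /η; lra.
apply: haus_le.
- move=> a ua; exists a; last by apply: (dE_refl hd) => //; rewrite mulr_gt0.
  apply: (cut0_pos hd); exact: lt_le_trans (inv_pos R n) ua.
- move=> b cb.
  have [[y t] sy ly] := (haus_lt ln).2 _ (send0 Fu cb).
  have [z vz dz] := hδ y sy.2.2.
  have svz : send d v (z, δ).
    split; first by rewrite /= (ltW δ0) /=; have /andP[_ h] := fuzzy01 z Fv; exact: le_trans h.
    split => //; apply: (cut0_pos hd); exact: lt_le_trans vz.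
  have [[w s'] sw lw] := (haus_lt ln).1 _ svz.
  exists w.
    rewrite /cut /=; have := dbar_n hd lw; have := sw.2.1; rewrite /= => h1 h2.
    have : `|δ - s'| < δ / 2 by apply: lt_le_trans h2 r2.
    move=> h3; have := ler_norm (δ - s'); have hq := le_lt_trans hnN hN.
    move: hq; generalize (n.+1%:R^-1 : R) => q hq; lra.
  have h1 := dbar_d lw; have h2 := dbar_d ly; rewrite /= in h1 h2.
  rewrite /dE lte_fin.
  have := d_tri hd w z b; have := d_tri hd z y b.
  rewrite (d_sym hd w z) (d_sym hd z y); lra.
Qed.


Lemma rel_U0 : relcompact_in FB (Hsend d) U -> relcompact_in setT (dE d) (U0 d U).
Proof.
move=> [UM Kc].
have [w Kw] := compact_nonempty Kc.
have [u0 [Uu0 _]] := Kw.2 1 ltr01.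
have [x0 cx0] := FUSC_cut0 hd (hU Uu0).1.
have Yx0 : closure_in setT (dE d) (U0 d U) x0.
  split => // e e0; exists x0; split; first by exists u0.
  exact: dE_refl.
split => //; apply: (ucX Yx0) => s Ys.
have Hy : forall n, exists p : X * (X -> R),
    U p.2 /\ cut0 d p.2 p.1 /\ d (s n) p.1 < n.+1%:R^-1.
  move=> n; have [_ h] := Ys n; have [a [[u Uu ca] la]] := h _ (inv_pos R n).
  by exists (a, u); rewrite /dE lte_fin in la.
have [pf hp] := choice Hy.
pose y n := (pf n).1; pose u n := (pf n).2.
have [v Kv vl] := cuF Kc (US (fun n _ => UsubK (hp n).1) UT).
have Fv := Kv.1; have [_ cv] := Fv.
have [z0 cz0] := compact_nonempty cv.
pose D n := inf [set d (y n) z | z in cut0 d v].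
have hinf : forall n, has_inf [set d (y n) z | z in cut0 d v].
  move=> n; split; first by exists (d (y n) z0), z0.
  by exists 0 => _ [z _ <-]; exact: d_ge0.
have Hz : forall n, exists z, cut0 d v z /\ d (y n) z < D n + n.+1%:R^-1.
  move=> n; have [_ [z cz <-] lt] := inf_adherent (inv_pos R n) (hinf n).
  by exists z.
have [zf hzf] := choice Hz.
have [z cz zl] := cuX cv (US (fun n _ => (hzf n).1) UT).
have ul : ulim (dE d) UF s z.
  move=> e e0; have e4 : 0 < e / 4 by rewrite divr_gt0.
  have [N hN] := exists_inv e4.
  apply: US (UI (zl _ e4) (UI (vl _ e4) (Ucof N))) => n [lz [lv Nn]].
  have Uu : U (u n) := (hp n).1.
  have syn := send0 (hU Uu) (hp n).2.1.
  have [[a t] sa la] := (haus_lt lv).2 _ syn.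
  have dya : d (y n) a < e / 4.
    by have := dbar_d la; rewrite /= (d_sym hd).
  have Dn : D n <= d (y n) a by apply: (ge_inf (hinf n).2); exists a => //; exact: sa.2.2.
  have hq : n.+1%:R^-1 < e / 4 := le_lt_trans (inv_le R Nn) hN.
  have hz : d (y n) (zf n) < D n + e / 4.
    by apply: lt_le_trans (hzf n).2 _; rewrite lerD2l ltW.
  have hy : d (s n) (y n) < e / 4 := lt_trans (hp n).2.2 hq.
  move: lz; rewrite /= /dE !lte_fin => lz.
  have := d_tri hd z (zf n) (s n); have := d_tri hd (zf n) (y n) (s n).
  rewrite (d_sym hd (zf n) (y n)) (d_sym hd (y n) (s n)).
  lra.
exists z => //.
apply: (closure_idem (dE_tri hd)) => //.
exact: uclX ul (US (fun n _ => Ys n) UT).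
Qed.



Lemma real_ulim (t : nat -> R) : UF [set n | 0 <= t n <= 1] ->
  exists L, 0 <= L <= 1 /\ forall e, 0 < e -> UF [set n | `|L - t n| < e].
Proof.
move=> h01; pose S := [set r : R | UF [set n | r <= t n]].
have S0 : S 0 by apply: US h01 => n /andP[].
have Sub : ubound S 1.
  move=> r Sr; rewrite leNgt; apply/negP => r1; apply: Uemp.
  by apply: US (UI Sr h01) => n [/= rt /andP[_ t1]]; lra.
have hs : has_sup S by split; [exists 0 | exists 1].
exists (sup S); split.
  apply/andP; split; first by have := sup_upper_bound hs S0.
  by apply: ge_sup => //; exists 0.
move=> e e0; have e2 : 0 < e / 2 by rewrite divr_gt0.
have nS : ~ S (sup S + e / 2).
  move=> Sx; have := sup_upper_bound hs Sx; lra.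
have [r Sr lr] := sup_adherent e2 hs.
case: (UU [set n | sup S + e / 2 <= t n]) => // hc.
apply: US (UI hc Sr) => n [/= h1 h2] /=.
have h1' : t n < sup S + e / 2 by rewrite ltNge; apply/negP.
rewrite ltr_norml; apply/andP; split; lra.
Qed.

Lemma lim_zero (x : R) : 0 <= x -> (forall e, 0 < e -> x < e) -> x = 0.
Proof.
move=> x0 h; apply/eqP; rewrite eq_le x0 andbT leNgt; apply/negP => xp.
by have := h x xp; rewrite ltxx.
Qed.

Section Constr.
Hypothesis hY : relcompact_in setT (dE d) (U0 d U).
Hypothesis heq : equi_right_cont0 d U.
Variable u : nat -> X -> R.
Hypothesis hu : forall n, U (u n).

Local Notation Y := (closure_in setT (dE d) (U0 d U)).

Definition Cset := [set p : X * R | forall e : R, 0 < e ->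
  UF [set n | exists2 q, send d (u n) q & (dbar d p q < e%:E)%E]].

Lemma pair_ulim (p : nat -> X * R) :
  UF [set n | Y (p n).1 /\ 0 <= (p n).2 <= 1] ->
  exists q, (Y q.1 /\ 0 <= q.2 <= 1) /\
    forall e, 0 < e -> UF [set n | (dbar d q (p n) < e%:E)%E].
Proof.
move=> hp.
have [x Yx xl] := cuX hY.2 (US (fun n (h : _ /\ _) => h.1) hp).
have [L [L01 Ll]] := real_ulim (US (fun n (h : _ /\ _) => h.2) hp).
exists (x, L); split => // e e0; have e2 : 0 < e / 2 by rewrite divr_gt0.
apply: US (UI (xl _ e2) (Ll _ e2)) => n [/= h1 /= h2] /=.
move: h1; rewrite /dE /dbar !lte_fin /= => h1; lra.
Qed.

Lemma send_sub n q : send d (u n) q -> Y q.1 /\ 0 <= q.2 <= 1.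
Proof.
move=> [q01 [_ cq]]; split => //; split => // e e0.
by exists q.1; split; [exists (u n) | exact: dE_refl].
Qed.

Lemma C_sub p : Cset p -> Y p.1 /\ 0 <= p.2 <= 1.
Proof.
move=> Cp; split.
  split => // e e0; have [n [q sq lq]] := ex (Cp e e0).
  exists q.1; split; first by exists (u n) => //; exact: sq.2.2.
  by rewrite /dE lte_fin; exact: dbar_d lq.
apply/andP; split; rewrite leNgt; apply/negP => h.
- have h' : 0 < - p.2 by rewrite oppr_gt0.
  have [n [q sq lq]] := ex (Cp _ h').
  have := dbar_n hd lq; move: sq => [/andP[q0 q1] _].
  rewrite ltr_norml => /andP[h1 h2]; lra.
- have h' : 0 < p.2 - 1 by rewrite subr_gt0.
  have [n [q sq lq]] := ex (Cp _ h').
  have := dbar_n hd lq; move: sq => [/andP[q0 q1] _].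
  rewrite ltr_norml => /andP[h1 h2]; lra.
Qed.

Lemma C_closed p : closure_in setT (dbar d) Cset p -> Cset p.
Proof.
move=> [_ h] e e0; have e2 : 0 < e / 2 by rewrite divr_gt0.
have [c [Cc lc]] := h _ e2.
apply: US (Cc _ e2) => n [q sq lq]; exists q => //.
by have := dbar_tri hd lc lq; rewrite -splitr.
Qed.

Lemma C_down x t s : Cset (x, t) -> 0 <= s <= t -> Cset (x, s).
Proof.
move=> Cxt /andP[s0 st] e e0; apply: US (Cxt e e0) => n [[y t'] sq lq].
move: sq => [/andP[t0 t1] [ty cy]]; rewrite /= in t0 t1 ty cy.
have hm : `|s - Num.min s t'| <= `|t - t'|.
  case: (lerP s t') => h.
    by rewrite subrr normr0.
  have e1 : 0 <= s - t' by rewrite subr_ge0 ltW.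
  have e2 : 0 <= t - t' by rewrite subr_ge0; apply: le_trans st; exact: ltW.
  rewrite (ger0_norm e1) (ger0_norm e2); lra.
have hm0 : 0 <= Num.min s t' by rewrite le_min s0 t0.
have hm1 : Num.min s t' <= t' by rewrite ge_min lexx orbT.
exists (y, Num.min s t').
  split; first by apply/andP; split => //=; lra.
  by split => //=; lra.
move: lq; rewrite /dbar !lte_fin /=; lra.
Qed.

Lemma C_lim (p : nat -> X * R) c : UF [set n | send d (u n) (p n)] ->
  (forall e, 0 < e -> UF [set n | (dbar d c (p n) < e%:E)%E]) -> Cset c.
Proof.
move=> hs hl e e0; apply: US (UI hs (hl e e0)) => n [sn ln]; by exists (p n).
Qed.

Lemma lim_snd q (p : nat -> X * R) c : (forall n, (p n).2 = c) ->
  (forall e, 0 < e -> UF [set n | (dbar d q (p n) < e%:E)%E]) -> q.2 = c.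
Proof.
move=> hc hl; apply/eqP; rewrite -subr_eq0 -normr_eq0; apply/eqP.
apply: lim_zero => // e e0; have [n ln] := ex (hl e e0).
by have := dbar_n hd ln; rewrite hc.
Qed.

Lemma C_top : exists x, Cset (x, 1).
Proof.
have H : forall n, exists x, send d (u n) (x, 1).
  by move=> n; apply: (FUSC_top hd); exact: (hU (hu n)).1.
have [pf hp] := choice H.
have [q [_ ql]] := @pair_ulim (fun n => (pf n, 1)) (US (fun n _ => send_sub (hp n)) UT).
have Cq := @C_lim (fun n => (pf n, 1)) q (US (fun n _ => hp n) UT) ql.
have q2 := @lim_snd q (fun n => (pf n, 1)) 1 (fun n => erefl) ql.
by exists q.1; rewrite -q2 -surjective_pairing.
Qed.

Lemma C_conv_a e : 0 < e -> UF [set n | forall q, send d (u n) q ->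
  exists2 c, Cset c & (dbar d c q < e%:E)%E].
Proof.
move=> e0; case: (UU [set n | forall q, send d (u n) q ->
  exists2 c, Cset c & (dbar d c q < e%:E)%E]) => // nA; exfalso.
have H : forall n, exists q, ~ (forall q, send d (u n) q ->
    exists2 c, Cset c & (dbar d c q < e%:E)%E) ->
    send d (u n) q /\ forall c, Cset c -> ~ (dbar d c q < e%:E)%E.
  move=> n; case: (pselect (forall q, send d (u n) q ->
    exists2 c, Cset c & (dbar d c q < e%:E)%E)) => An.
    have [x cx] := FUSC_cut0 hd (hU (hu n)).1; by exists (x, 0).
  move: An => /existsNP [q] /not_implyP [sq nq]; exists q => _; split => //.
  by move=> c Cc lt; apply: nq; exists c.
have [pf hp] := choice H.
have [c [_ cl]] := @pair_ulim pf (US (fun n hn => send_sub (hp n hn).1) nA).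
have Cc := C_lim (US (fun n hn => (hp n hn).1) nA) cl.
have [n [ln hn]] := ex (UI (cl e e0) nA).
by have [_ hq] := hp n hn; exact: (hq c Cc ln).
Qed.

Lemma C_conv_b e : 0 < e -> UF [set n | forall c, Cset c ->
  exists2 q, send d (u n) q & (dbar d c q < e%:E)%E].
Proof.
move=> e0; case: (UU [set n | forall c, Cset c ->
  exists2 q, send d (u n) q & (dbar d c q < e%:E)%E]) => // nB; exfalso.
have H : forall n, exists c, ~ (forall c, Cset c ->
    exists2 q, send d (u n) q & (dbar d c q < e%:E)%E) ->
    Cset c /\ forall q, send d (u n) q -> ~ (dbar d c q < e%:E)%E.
  move=> n; case: (pselect (forall c, Cset c ->
    exists2 q, send d (u n) q & (dbar d c q < e%:E)%E)) => Bn.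
    have [x cx] := FUSC_cut0 hd (hU (hu n)).1; by exists (x, 0).
  move: Bn => /existsNP [c] /not_implyP [Cc nq]; exists c => _; split => //.
  by move=> q sq lt; apply: nq; exists q.
have [pf hp] := choice H.
have [c [_ cl]] := @pair_ulim pf (US (fun n hn => C_sub (hp n hn).1) nB).
have Cc : Cset c.
  apply: C_closed; split => // e' e'0; have [n [ln hn]] := ex (UI (cl e' e'0) nB).
  by exists (pf n); split => //; exact: (hp n hn).1.
have e2 : 0 < e / 2 by rewrite divr_gt0.
have [n [[q sq lq] [ln hn]]] := ex (UI (Cc _ e2) (UI (cl _ e2) nB)).
have [_ hq] := hp n hn; apply: (hq q sq).
move: ln; rewrite /= (dbar_sym hd) => ln.
by have := dbar_tri hd ln lq; rewrite -splitr.
Qed.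

Definition vlim (x : X) : R :=
  if pselect (Cset (x, 0)) is left _ then sup [set t | Cset (x, t)] else 0.

Lemma v_hassup x : Cset (x, 0) -> has_sup [set t | Cset (x, t)].
Proof.
move=> C0; split; first by exists 0.
exists 1 => t Ct; have := (C_sub Ct).2; by move=> /andP[].
Qed.

Lemma v_eq x : Cset (x, 0) -> vlim x = sup [set t | Cset (x, t)].
Proof. by move=> C0; rewrite /vlim; case: pselect. Qed.

Lemma v_attained x : Cset (x, 0) -> Cset (x, vlim x).
Proof.
move=> C0; apply: C_closed; split => // e e0.
have [t Ct lt] := sup_adherent e0 (v_hassup C0).
have tle := sup_upper_bound (v_hassup C0) Ct.
exists (x, t); split => //.
rewrite /dbar d_xx // add0r lte_fin v_eq // /= ger0_norm ?subr_ge0 //; lra.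
Qed.

Lemma v_char x t : Cset (x, t) <-> [/\ 0 <= t, Cset (x, 0) & t <= vlim x].
Proof.
split.
  move=> Ct; have /andP[t0 _] := (C_sub Ct).2.
  have C0 : Cset (x, 0) by apply: C_down Ct _; rewrite lexx t0.
  split => //; rewrite v_eq //; by have := sup_upper_bound (v_hassup C0) Ct.
move=> [t0 C0 tv]; apply: C_down (v_attained C0) _; by rewrite t0.
Qed.

Lemma v01 x : 0 <= vlim x <= 1.
Proof.
case: (pselect (Cset (x, 0))) => C0.
  exact: (C_sub (v_attained C0)).2.
by rewrite /vlim; case: pselect => // _; rewrite lexx ler01.
Qed.

Lemma v_pos x : 0 < vlim x -> Cset (x, 0).
Proof.
rewrite /vlim; case: pselect => // _; by rewrite ltxx.
Qed.

Lemma cut0_v x : cut0 d vlim x <-> Cset (x, 0).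
Proof.
split.
  move=> [_ h]; apply: C_closed; split => // e e0; have [a [pa la]] := h e e0.
  exists (a, 0); split; first exact: v_pos pa.
  by move: la; rewrite /dE /dbar /= subrr normr0 addr0.
move=> C0; split => // e e0.
pose η := e / 4; have η0 : 0 < η by rewrite divr_gt0.
have [δ δ0 hδ] := heq η0.
pose A := [set n | exists2 q, send d (u n) q & (dbar d (x, 0%R) q < η%:E)%E].
have UA : UF A := C0 η η0.
have H : forall n, exists z, A n -> δ <= u n z /\ d x z < 2 * η.
  move=> n; case: (pselect (A n)) => An; last by exists x.
  have [[y t] sq lq] := An.
  have dxy := dbar_d lq; rewrite /= in dxy.
  have hh := hδ (u n) (hu n); rewrite cutA_pos // in hh.
  have [z cz lz] := (haus_lt hh).2 y sq.2.2.
  exists z => _; split => //.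
  move: lz; rewrite /dE lte_fin => lz.
  have := d_tri hd x y z; rewrite (d_sym hd y z); lra.
have [zf hz] := choice H.
pose p n := (zf n, δ).
have sp : forall n, A n -> send d (u n) (p n).
  move=> n An; have [h1 h2] := hz n An.
  have := fuzzy01 (zf n) (hU (hu n)) => /andP[_ h3].
  split; first by apply/andP; split => /=; [exact: ltW | exact: le_trans h3].
  split => //=; apply: (cut0_pos hd); exact: lt_le_trans h1.
have [q [_ ql]] := @pair_ulim p (US (fun n An => send_sub (sp n An)) UA).
have Cq := C_lim (US sp UA) ql.
have δ2 : 0 < δ / 2 by rewrite divr_gt0.
pose r := Num.min η (δ / 2).
have r0 : 0 < r by rewrite lt_min η0 δ2.
have r1 : r <= η by rewrite ge_min lexx.
have r2 : r <= δ / 2 by rewrite ge_min lexx orbT.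
have [n [ln An]] := ex (UI (ql r r0) UA).
have [h1 h2] := hz n An.
exists q.1; split.
  have Cq' : Cset (q.1, q.2) by rewrite -surjective_pairing.
  have [q0 _ qv] := (v_char q.1 q.2).1 Cq'.
  have := dbar_n hd ln; rewrite /= ltr_norml => /andP[hn1 hn2].
  rewrite /=; lra.
have := dbar_d ln; rewrite /= => hq.
rewrite /dE lte_fin; have := d_tri hd x (zf n) q.1; rewrite (d_sym hd (zf n) q.1).
rewrite /η in h2 r1; lra.
Qed.

Lemma send_v : send d vlim = Cset.
Proof.
apply/funext => -[x t]; apply/propext; split.
  move=> [/andP[t0 t1] [tv c0]]; apply/v_char; split => //; exact/cut0_v.
move=> Ct; have [t0 C0 tv] := (v_char x t).1 Ct.
split; first by have := (C_sub Ct).2.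
by split => //; exact/cut0_v.
Qed.

Lemma FB_v : FUSCB d vlim.
Proof.
have [x1 C1] := C_top.
have C10 : Cset (x1, 0) by apply: C_down C1 _; rewrite lexx ler01.
split; [split|].
- move=> x; exact: v01.
- move=> α /andP[α0 α1]; rewrite /cutA; case: eqP => [_|αn0].
    split; first by exists x1; apply/cut0_v.
    split => //.
    by apply: (closure_idem (dE_tri hd) (A := [set x | 0 < vlim x])).
  have αp : 0 < α by rewrite lt_neqAle eq_sym α0 andbT; apply/eqP.
  have cutc : forall y, cut vlim α y <-> Cset (y, α).
    move=> y; split.
      move=> ay; apply/v_char; split => //; apply: v_pos; exact: lt_le_trans ay.
    by move=> /v_char [].
  split; first by exists x1; apply/cutc; apply: C_down C1 _; rewrite (ltW αp) α1.
  split => // y [_ h]; apply/cutc; apply: C_closed; split => // e e0.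
  have [z [cz lz]] := h e e0; exists (z, α); split; first exact/cutc.
  by move: lz; rewrite /dE /dbar subrr normr0 addr0 /=.
- apply: (@ucX _ x1); first exact/cut0_v.
  move=> z hz.
  have hz' : forall n, Cset (z n, 0) by move=> n; apply/cut0_v.
  have [q [_ ql]] := @pair_ulim (fun n => (z n, 0)) (US (fun n _ => C_sub (hz' n)) UT).
  have Cq : Cset q.
    apply: C_closed; split => // e e0; have [n ln] := ex (ql e e0).
    by exists (z n, 0); split.
  exists q.1.
    apply/cut0_v; apply: C_down (_ : Cset (q.1, q.2)) _.
      by rewrite -surjective_pairing.
    by have := (C_sub Cq).2 => /andP[q0 _]; rewrite lexx q0.
  move=> e e0; apply: US (ql e e0) => n ln; rewrite /= /dE lte_fin.
  exact: dbar_d ln.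
Qed.

Lemma v_ulim : ulim (Hsend d) UF u vlim.
Proof.
move=> e e0; have e2 : 0 < e / 2 by rewrite divr_gt0.
apply: US (UI (C_conv_a e2) (C_conv_b e2)) => n [ha hb] /=.
rewrite /Hsend send_v.
apply: le_lt_trans (haus_le hb ha) _; rewrite lte_fin; lra.
Qed.

End Constr.

Lemma rel_back : relcompact_in setT (dE d) (U0 d U) -> equi_right_cont0 d U ->
  relcompact_in FB (Hsend d) U.
Proof.
move=> hY heq; split => //.
have [y0 Yy0] := compact_nonempty hY.2.
have [a [[u0 Uu0 _] _]] := Yy0.2 1 ltr01.
apply: (@ucF _ u0); [by move=> w [] | exact: UsubK |].
move=> w Kw.
have H : forall n, exists v, U v /\ (Hsend d (w n) v < (n.+1%:R^-1)%:E)%E.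
  move=> n; have [_ h] := Kw n; have [v [Uv lv]] := h _ (inv_pos R n).
  by exists v.
have [uf huf] := choice H.
have Uu : forall n, U (uf n) := fun n => (huf n).1.
have Fv := FB_v hY heq Uu.
have vl := v_ulim hY heq Uu.
exists (vlim uf).
  by apply: (uclF Fv vl); apply: US UT => n _; exact: Uu n.
move=> e e0; have e2 : 0 < e / 2 by rewrite divr_gt0.
have [N hN] := exists_inv e2.
apply: US (UI (vl _ e2) (Ucof N)) => n [/= ln Nn].
have l2 : (Hsend d (uf n) (w n) < (e / 2)%:E)%E.
  rewrite Hs_sym //; apply: lt_le_trans (huf n).2 _.
  by rewrite lee_fin; apply: ltW; apply: le_lt_trans (inv_le R Nn) hN.
have := @Hs_tri _ _ _ hd setT _ _ _ _ _ I I I ln l2.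
by rewrite -splitr.
Qed.

End Main.

Lemma ultra_exists : exists UF : set (set nat),
  UF setT /\ (forall A B, UF A -> UF B -> UF (A `&` B)) /\
      (forall A B, A `<=` B -> UF A -> UF B) /\ ~ UF set0 /\
      (forall A, UF A \/ UF (~` A)) /\ (forall N, UF [set n | (N <= n)%N]).
Proof.
pose F := [set A : set nat | exists N, forall n, (N <= n)%N -> A n].
have FF : ProperFilter F.
  constructor.
    by move=> [N h]; exact: (h N (leqnn N)).
  constructor.
  - by exists 0%N.
  - move=> A B [N1 h1] [N2 h2]; exists (maxn N1 N2) => n hn.
    by rewrite geq_max in hn; case/andP: hn => hn1 hn2; split; [apply: h1 | apply: h2].
  - by move=> A B AB [N h]; exists N => n hn; apply/AB/h.
have [G [GU FG]] := ultraFilterLemma FF.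
have GF : ProperFilter G := @ultra_proper _ _ GU.
exists G; split; [|split; [|split; [|split; [|split]]]].
- exact: filterT.
- by move=> A B; exact: filterI.
- by move=> A B; exact: filterS.
- exact: filter_not_empty.
- by move=> A; exact: in_ultra_setVsetC.
- by move=> N; apply: FG; exists N.
Qed.

Unset Implicit Arguments.

Theorem theorem5p15 (R : realType) (X : Type) (d : X -> X -> R)
  (hd : is_metric d) (U : set (X -> R)) (hU : U `<=` FUSCB d) :
  relcompact_in (FUSCB d) (Hsend d) U <->
  (relcompact_in setT (dE d) (U0 d U) /\ equi_right_cont0 d U).
Proof.
have [UF [hT [hI [hS [h0 [hUU hC]]]]]] := ultra_exists.
split.
  move=> h; split.
    exact: (rel_U0 hd hT hI hS h0 hUU hC hU h).
  exact: (rel_equi hd hT hI hS h0 hUU hC hU h).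
move=> [h1 h2]; exact: (rel_back hd hT hI hS h0 hUU hC hU h1 h2).
Qed.
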